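(* Let $\mathcal{G}$ be a multi-layer graph with $l$ layers, $d,s,k\in\mathbb{N}$ with $k\ge1$, and $\mathcal{R}$ a collection of exactly $k$ subsets of $V(\mathcal{G})$. Let $L\subseteq\{1,\dots,l\}$ with $|L|>s$, and let $U$ be a potential vertex set for $L$, i.e., $C^d_S(\mathcal{G})\subseteq U$ for every top-down descendant $S$ of $L$ with $|S|=s$. Suppose $|\mathsf{Cov}((\mathcal{R}-\{C^*(\mathcal{R})\})\cup\{C^d_L(\mathcal{G})\})|\ge(1+\frac1k)|\mathsf{Cov}(\mathcal{R})|$ and $|U|<(\frac1k+\frac1{k^2})|\mathsf{Cov}(\mathcal{R})|+(1+\frac1k)|\Delta(\mathcal{R},C^*(\mathcal{R}))|$. Let $S_1,S_2$ be top-down descendants of $L$ with $|S_1|=|S_2|=s$ and $C^d_{S_1}(\mathcal{G})\neq C^d_{S_2}(\mathcal{G})$. If $C^d_{S_1}(\mathcal{G})$ satisfies $|\mathsf{Cov}((\mathcal{R}-\{C^*(\mathcal{R})\})\cup\{C^d_{S_1}(\mathcal{G})\})|\ge(1+\frac1k)|\mathsf{Cov}(\mathcal{R})|$ and $\mathcal{R}'=(\mathcal{R}-\{C^*(\mathcal{R})\})\cup\{C^d_{S_1}(\mathcal{G})\}$ is the updated collection, then $|\mathsf{Cov}((\mathcal{R}'-\{C^*(\mathcal{R}')\})\cup\{C^d_{S_2}(\mathcal{G})\})|<(1+\frac1k)|\mathsf{Cov}(\mathcal{R}')|$, i.e., $C^d_{S_2}(\mathcal{G})$ cannot update $\mathc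al{R}'$.
   Context: A multi-layer graph $\mathcal{G}=(V,E_1,\dots,E_l)$ consists of a finite vertex set $V$ and edge sets $E_i$ of simple undirected graphs $G_i=(V,E_i)$. A graph is $d$-dense if every vertex has degree at least $d$; the $d$-coherent core $C^d_L(\mathcal{G})$ is the unique maximal $S\subseteq V$ such that the induced subgraph $G_i[S]$ is $d$-dense for all $i\in L$. Top-down search tree: $L$ is the parent of $L'$ if $L'=L-\{\ell\}$ for some $\ell\in L$ with $\ell>\max(\{1,\dots,l\}-L)$ ($\max(\emptyset)=-\infty$); top-down descendants are obtained by iterating the child relation. For a collection $\mathcal{R}$ of sets, $\mathsf{Cov}(\mathcal{R})=\bigcup_{R\in\mathcal{R}}R$; for $C'\in\mathcal{R}$, $\Delta(\mathcal{R},C')=C'-\mathsf{Cov}(\mathcal{R}-\{C'\})$; $C^*(\mathcal{R})$ is a fixed element of $\mathcal{R}$ minimizing $|\Delta(\mathcal{R},C')|$. A set $C$ ''updates'' a $k$-element collection $\mathcal{R}$ if $|\mathsf{Cov}((\mathcal{R}-\{C^*(\mathcal{R})\})\cup\{C\})|\ge(1+\frac1k)|\mathsf{Cov}(\mathcal{R})|$, in which case $C^*(\mathcal{R})$ is replaced by $C$. *)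

(* Defs.v *)
From mathcomp Require Import all_boot all_order all_algebra.
Set Implicit Arguments. Unset Strict Implicit. Unset Printing Implicit Defensive.

(* A multi-layer graph on vertex set V (a finType) with l layers is given by
   E : 'I_l -> rel V, each E i being the adjacency relation of a simple
   undirected graph (symmetric and irreflexive; imposed as hypotheses).
   Layers are indexed by 'I_l = {0,...,l-1} instead of {1,...,l}; the order
   is preserved so the top-down tree is the same up to the shift. *)

Definition simple_layers (V : finType) (l : nat) (E : 'I_l -> rel V) : Prop :=
  forall i : 'I_l, symmetric (E i) /\ irreflexive (E i).

Definition dense_in (V : finType) (e : rel V) (d : nat) (S : {set V}) : bool :=
  [forall v in S, d <= #|[set u in S | e v u]|].

Definition coherent (V : finType) (l : nat) (E : 'I_l -> rel V) (d : nat)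
  (L : {set 'I_l}) (S : {set V}) : bool :=
  [forall i in L, dense_in (E i) d S].

(* The d-coherent core: the (unique) maximal S that is coherent for L.
   We pick a maximal one (uniqueness is a fact about it). *)
Definition core (V : finType) (l : nat) (E : 'I_l -> rel V) (d : nat)
  (L : {set 'I_l}) : {set V} :=
  odflt set0 [pick S : {set V} | coherent E d L S &&
     [forall T : {set V}, (coherent E d L T && (S \subset T)) ==> (T == S)]].

Definition td_child (l : nat) (L L' : {set 'I_l}) : bool :=
  [exists x in L, (L' == L :\ x) && [forall j : 'I_l, (j \notin L) ==> (j < x)]].

Definition td_desc (l : nat) (L S : {set 'I_l}) : bool :=
  connect (@td_child l) L S.

Definition Cov (V : finType) (R : {set {set V}}) : {set V} :=
  \bigcup_(C in R) C.

Definition Delta (V : finType) (R : {set {set V}}) (C : {set V}) : {set V} :=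
  C :\: Cov (R :\ C).

Definition is_Cstar (V : finType) (cstar : {set {set V}} -> {set V}) : Prop :=
  forall R : {set {set V}}, R != set0 ->
    cstar R \in R /\
    (forall C, C \in R -> #|Delta R (cstar R)| <= #|Delta R C|)%N.

Definition replaced (V : finType) (cstar : {set {set V}} -> {set V})
  (R : {set {set V}}) (C : {set V}) : {set {set V}} :=
  (R :\ cstar R) :|: [set C].

Local Open Scope ring_scope.

Definition updates (V : finType) (cstar : {set {set V}} -> {set V}) (k : nat)
  (R : {set {set V}}) (C : {set V}) : bool :=
  (1 + k%:R^-1) * (#|Cov R|%:R : rat) <= (#|Cov (replaced cstar R C)|%:R : rat).

(* Main.v *)
Require Import Defs.
From mathcomp Require Import all_boot all_order all_algebra.
From mathcomp Require Import ring lra.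
Import Order.TTheory GRing.Theory Num.Theory.
Local Open Scope ring_scope.

Lemma card_UD (T : finType) (A C : {set T}) :
  #|A :|: C| = (#|A| + #|C :\: A|)%N.
Proof.
rewrite -(cardsID A (A :|: C)).
have -> : (A :|: C) :&: A = A by apply/setP=> x; rewrite !inE; case: (x \in A); case: (x \in C).
have -> : (A :|: C) :\: A = C :\: A by apply/setP=> x; rewrite !inE; case: (x \in A); case: (x \in C).
by [].
Qed.

Lemma Cov_repl (V : finType) (cstar : {set {set V}} -> {set V}) R C :
  Cov (replaced cstar R C) = Cov (R :\ cstar R) :|: C.
Proof. by rewrite /Cov /replaced bigcup_setU big_set1. Qed.

Lemma Cov_split (V : finType) (R : {set {set V}}) C : C \in R ->
  #|Cov R| = (#|Cov (R :\ C)| + #|Delta R C|)%N.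
Proof.
move=> CR; rewrite /Delta -card_UD /Cov (big_setD1 _ CR) /= setUC //.
Qed.

Lemma Cov_sub (V : finType) (R : {set {set V}}) C : C \in R -> C \subset Cov R.
Proof. by move=> CR; apply: (bigcup_sup C CR). Qed.

Lemma Cov_mono (V : finType) (R Q : {set {set V}}) : R \subset Q -> Cov R \subset Cov Q.
Proof.
move=> RQ; apply/bigcupsP=> C CR; apply: Cov_sub; exact: (subsetP RQ).
Qed.

Lemma arith1 (t a b x y dl dl' c c' u : rat) :
  (1 + t) * c <= a + x -> (1 + t) * c' <= b + y ->
  u < (t + t * t) * c + (1 + t) * dl ->
  c' = a + x -> c = a + dl -> c' = b + dl' ->
  0 <= t * (c' - (1 + t) * c) -> 0 <= t * (c - dl) -> 0 <= dl' ->
  x + y <= u -> False.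
Proof. move=> *; lra. Qed.

Lemma arith2 (t a b x y dl dl' c c' u : rat) :
  (1 + t) * c <= a + x -> (1 + t) * c' <= b + y ->
  u < (t + t * t) * c + (1 + t) * dl ->
  c' = a + x -> c = a + dl -> c' = b + dl' ->
  0 <= t * (c' - (1 + t) * c) -> 0 <= t * (c - dl) -> 0 <= dl' ->
  y <= u -> x <= dl' -> False.
Proof. move=> *; lra. Qed.

Theorem lemma7 (V : finType) (l : nat) (E : 'I_l -> rel V)
  (cstar : {set {set V}} -> {set V}) (d s k : nat)
  (R : {set {set V}}) (L : {set 'I_l}) (U : {set V}) (S1 S2 : {set 'I_l}) :
  simple_layers E ->
  is_Cstar cstar ->
  (1 <= k)%N ->
  #|R| = k ->
  (s < #|L|)%N ->
  (forall S : {set 'I_l}, td_desc L S -> #|S| = s -> core E d S \subset U) ->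
  updates cstar k R (core E d L) ->
  (#|U|%:R : rat) < (k%:R^-1 + (k%:R ^+ 2)^-1) * #|Cov R|%:R
                    + (1 + k%:R^-1) * #|Delta R (cstar R)|%:R ->
  td_desc L S1 -> td_desc L S2 -> #|S1| = s -> #|S2| = s ->
  core E d S1 != core E d S2 ->
  updates cstar k R (core E d S1) ->
  let R' := replaced cstar R (core E d S1) in
  ~~ updates cstar k R' (core E d S2).
Proof.
move=> _ Hcs k1 Rk _ HU _ Hlt D1 D2 s1 s2 _ Up1.
change (~~ updates cstar k (replaced cstar R (core E d S1)) (core E d S2)).
set R' := replaced cstar R (core E d S1).
set C1 := core E d S1; set C2 := core E d S2.
have C1U : C1 \subset U by exact: HU.
have C2U : C2 \subset U by exact: HU.
have Rne : R != set0 by apply/eqP=> R0; move: Rk; rewrite R0 cards0 => k0; rewrite -k0 in k1.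
have [CsR _] := Hcs R Rne.
have C1R' : C1 \in R' by rewrite /R' /replaced !inE eqxx orbT.
have R'ne : R' != set0 by apply/set0Pn; exists C1.
have [CsR' _] := Hcs R' R'ne.
set A := Cov (R :\ cstar R).
set B := Cov (R' :\ cstar R').
set c := #|Cov R|. set dl := #|Delta R (cstar R)|.
set c' := #|Cov R'|. set dl' := #|Delta R' (cstar R')|.
set x := #|C1 :\: A|. set y := #|C2 :\: B|.
have Ec : c = (#|A| + dl)%N by exact: Cov_split.
have Ec' : c' = (#|B| + dl')%N by exact: Cov_split.
have Hc1 : #|Cov (replaced cstar R C1)| = (#|A| + x)%N by rewrite Cov_repl card_UD.
have Hc2 : #|Cov (replaced cstar R' C2)| = (#|B| + y)%N by rewrite Cov_repl card_UD.
have Hc' : c' = (#|A| + x)%N by [].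
have dlc : (dl <= c)%N by rewrite Ec leq_addl.
have key : ((x + y <= #|U|)%N \/ ((y <= #|U|)%N /\ (x <= dl')%N)).
  have [E1|N1] := eqVneq (cstar R') C1.
  - right; split.
      by apply: leq_trans (subset_leq_card C2U); apply: subset_leq_card; apply: subsetDl.
    rewrite /dl' /Delta -/B.
    have -> : cstar R' :\: B = C1 :\: B by rewrite E1.
    rewrite /x; apply: subset_leq_card; apply: setDS.
    rewrite /B /A; apply: Cov_mono; apply/subsetP=> C.
    rewrite /R' /replaced !inE => /andP [nC /orP [// | /eqP CC1]].
    rewrite CC1 in nC; case/negP: nC; apply/eqP; symmetry; exact: E1.
  - left.
    have C1B : C1 \subset B by apply: Cov_sub; rewrite in_setD1 eq_sym N1 /=; exact: C1R'.
    apply: (@leq_trans #|C1 :|: (C2 :\: B)|).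
      rewrite card_UD.
      have -> : (C2 :\: B) :\: C1 = C2 :\: B.
        apply/setP=> v; rewrite !inE; case vC1: (v \in C1) => //=.
        by rewrite (subsetP C1B v vC1).
      apply: leq_add => //; apply: subset_leq_card; apply: subsetDl.
    apply: subset_leq_card; rewrite subUset C1U /=.
    exact: subset_trans (subsetDl _ _) C2U.
apply/negP=> Up2.
move: Up1 Up2 Hlt; rewrite /updates -/R' -/C1 Hc1 Hc2 -/c -/dl -/c' => Up1 Up2 Hlt.
have kpos : (0 : rat) < k%:R by rewrite ltr0n.
set t : rat := k%:R^-1.
have tpos : 0 < t by rewrite invr_gt0.
rewrite -exprVn -/t expr2 in Hlt.
have Ec'Q : (c'%:R : rat) = #|A|%:R + x%:R by rewrite Hc' natrD.
have EcQ : (c%:R : rat) = #|A|%:R + dl%:R by rewrite Ec natrD.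
have Ec2Q : (c'%:R : rat) = #|B|%:R + dl'%:R by rewrite Ec' natrD.
have dlcQ : (dl%:R : rat) <= c%:R by rewrite ler_nat.
have P1 : 0 <= t * (c'%:R - (1 + t) * c%:R).
  by apply: mulr_ge0; [exact: ltW | rewrite subr_ge0 Hc'].
have P2 : 0 <= t * (c%:R - dl%:R) by apply: mulr_ge0; [exact: ltW | rewrite subr_ge0].
have x0 : (0:rat) <= x%:R by [].
have dl0 : (0:rat) <= dl'%:R by [].
case: key => [H | [H1 H2]].
  have HQ : ((x + y)%N%:R : rat) <= #|U|%:R by rewrite ler_nat.
  rewrite natrD in HQ; rewrite !natrD in Up1 Up2.
  rewrite -Ec'Q in Up2; by case: (arith1 t _ _ _ _ _ _ _ _ _ Up1 Up2 Hlt Ec'Q EcQ Ec2Q P1 P2 dl0 HQ).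
have H1Q : (y%:R : rat) <= #|U|%:R by rewrite ler_nat.
have H2Q : (x%:R : rat) <= dl'%:R by rewrite ler_nat.
rewrite !natrD in Up1 Up2.
rewrite -Ec'Q in Up2; by case: (arith2 t _ _ _ _ _ _ _ _ _ Up1 Up2 Hlt Ec'Q EcQ Ec2Q P1 P2 dl0 H1Q H2Q).
Qed.
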